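(* Let $G_1$ be an $r_1$-regular graph with $r_1\ge 1$ on $n_1$ vertices and $m_1$ edges, and let $G_2$ be an $r_2$-regular graph with $r_2\ge1$ on $n_2$ vertices. Let $0=\mu_1,\mu_2,\ldots,\mu_{n_1}$ be the normalized Laplacian eigenvalues of $G_1$ and $0=\nu_1,\nu_2,\ldots,\nu_{n_2}$ those of $G_2$ (listed with multiplicity). Then the normalized Laplacian spectrum (as a multiset) of the subdivision-vertex join $G_1\dot{\vee}G_2$ consists of: (i) $0$; (ii) $1$, with multiplicity $m_1-n_1$; (iii) $\dfrac{n_1+r_2\nu_i}{r_2+n_1}$ for $i=2,\ldots,n_2$; (iv) for each $i=2,\ldots,n_1$, the two roots of $(x-1)^2-\dfrac{r_1(2-\mu_i)}{2(r_1+n_2)}=0$; (v) the two roots of $x^2-\left(2+\dfrac{n_1}{r_2+n_1}\right)x+\dfrac{2n_1}{r_2+n_1}+\dfrac{n_2r_2}{(r_1+n_2)(r_2+n_1)}=0$. (If $m_1<n_1$, which can only happen when $r_1=1$, item (ii) means that $n_1-m_1$ copies of $1$ are removed from the multiset formed by items (i), (iii), (iv), (v).) Equivalently, the characteristic polynomial of $\mathcal{L}(G_1\dot{\vee}G_2)$ equals $$x(x-1)^{m_1-n_1}\left(x^2-\left(2+\tfrac{n_1}{r_2+n_1}\right)x+\tfrac{2n_1}{r_2+n_1}+\tfrac{n_2r_2}{(r_1+n_2)(r_2+n_1)}\right)\prod_{i=2}^{n_1}\left((x-1)^2-\tfrac{r_1(2-\mu_i)}{2(r_1+n_2)}\right)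\prod_{i=2}^{n_2}\left(x-\tfrac{n_1+r_2\nu_i}{r_2+n_1}\right).$$
   Context: All graphs are finite and simple. For a graph $G$ without isolated vertices, with adjacency matrix $A(G)$ and diagonal degree matrix $D(G)$, the normalized Laplacian matrix is $\mathcal{L}(G)=I-D(G)^{-1/2}A(G)D(G)^{-1/2}$; its eigenvalues (with multiplicity) form the normalized Laplacian spectrum of $G$. The subdivision graph $S(G)$ of $G$ is obtained by inserting a new vertex into every edge of $G$; the set of these new vertices is denoted $I(G)$. The subdivision-vertex join $G_1\dot{\vee}G_2$ of graphs $G_1,G_2$ is the graph obtained from $S(G_1)$ and (a disjoint copy of) $G_2$ by joining each vertex of $V(G_1)$ with every vertex of $V(G_2)$. *)

(* Defs.v *)
From HB Require Import structures.
From mathcomp Require Import all_boot all_order all_algebra.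
Set Implicit Arguments. Unset Strict Implicit. Unset Printing Implicit Defensive.
Import Order.TTheory GRing.Theory Num.Theory.
Local Open Scope ring_scope.

Definition simple_graph (V : finType) (e : rel V) : Prop :=
  symmetric e /\ irreflexive e.

Definition deg (V : finType) (e : rel V) (v : V) : nat := #|[set w | e v w]|.

Definition regular (V : finType) (e : rel V) (r : nat) : Prop :=
  forall v : V, deg e v = r.

Definition is_edge (V : finType) (e : rel V) (s : {set V}) : bool :=
  [exists x, exists y, e x y && (s == [set x; y])].

Definition edgeT (V : finType) (e : rel V) : finType :=
  {s : {set V} | is_edge e s}.

Definition nedges (V : finType) (e : rel V) : nat := #|{: edgeT e}|.

(* subdivision-vertex join: vertices (V(G1) + I(G1)) + V(G2) *)
Definition sv_join_rel (V1 V2 : finType) (e1 : rel V1) (e2 : rel V2)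
  : rel ((V1 + edgeT e1) + V2) :=
  fun x y =>
    match x, y with
    | inl (inl u), inl (inr f) => u \in val f
    | inl (inr f), inl (inl u) => u \in val f
    | inl (inl _), inr _ => true
    | inr _, inl (inl _) => true
    | inr w, inr w' => e2 w w'
    | _, _ => false
    end.

Arguments sv_join_rel {V1 V2} e1 e2 _ _.

Definition adjmx (R : rcfType) (V : finType) (e : rel V) : 'M[R]_#|V| :=
  \matrix_(i, j) (e (enum_val i) (enum_val j))%:R.

Definition degmx_invsqrt (R : rcfType) (V : finType) (e : rel V) : 'M[R]_#|V| :=
  diag_mx (\row_i (Num.sqrt ((deg e (enum_val i))%:R : R))^-1).

Definition nlap (R : rcfType) (V : finType) (e : rel V) : 'M[R]_#|V| :=
  1%:M - degmx_invsqrt R e *m adjmx R e *m degmx_invsqrt R e.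

(* Main.v *)
Require Import Defs.
From HB Require Import structures.
From mathcomp Require Import all_boot all_order all_algebra.
From mathcomp Require Import fingroup perm ring lra.
Import Order.TTheory GRing.Theory Num.Theory.
Local Open Scope ring_scope.
Set Implicit Arguments. Unset Strict Implicit. Unset Printing Implicit Defensive.
Section Gen.
Variable R : fieldType.

Lemma schur_ul m n (y : R) (B : 'M[R]_(m, n)) (C : 'M[R]_(n, m)) (D : 'M[R]_n) :
  y != 0 ->
  \det (block_mx (y%:M) B C D) = y ^+ m * \det (D - y^-1 *: (C *m B)).
Proof.
move=> y0.
have E : block_mx 1%:M 0 (- (y^-1 *: C)) 1%:M *m block_mx (y%:M) B C D
   = block_mx (y%:M) B 0 (D - y^-1 *: (C *m B)).
  rewrite mulmx_block !mul1mx !mul0mx !addr0 !mulNmx -!scalemxAl mul_mx_scalar.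
  by rewrite scalerA mulVf // scale1r addNr addrC.
have := congr1 determinant E.
rewrite det_mulmx det_lblock !det1 !mul1r => ->.
by rewrite det_ublock det_scalar.
Qed.

Lemma schur_dr m n (y : R) (A : 'M[R]_m) (B : 'M[R]_(m, n)) (C : 'M[R]_(n, m)) :
  y != 0 ->
  \det (block_mx A B C (y%:M)) = y ^+ n * \det (A - y^-1 *: (B *m C)).
Proof.
move=> y0.
have E : block_mx A B C (y%:M) *m block_mx 1%:M 0 (- (y^-1 *: C)) 1%:M
   = block_mx (A - y^-1 *: (B *m C)) B 0 (y%:M).
  rewrite mulmx_block !mulmx1 !mulmx0 ?addr0 ?add0r !mulmxN -!scalemxAr mul_scalar_mx.
  by rewrite scalerA mulVf // scale1r subrr.
have := congr1 determinant E.
rewrite det_mulmx det_lblock !det1 !mulr1 => ->.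
by rewrite det_ublock det_scalar mulrC.
Qed.

Lemma det_I_J n (d : R) :
  \det (1%:M + d *: const_mx 1 : 'M[R]_n) = 1 + d * n%:R.
Proof.
have H1 := @schur_ul 1 n (1 : R) (- const_mx 1 : 'M_(1, n)) (d *: const_mx 1 : 'M_(n,1)) 1%:M (oner_neq0 _).
have H2 := @schur_dr 1 n (1 : R) (1 : 'M_1) (- const_mx 1 : 'M_(1, n)) (d *: const_mx 1 : 'M_(n,1)) (oner_neq0 _).
rewrite H2 invr1 !scale1r expr1n !mul1r in H1.
have E1 : 1%:M - (d *: const_mx 1 : 'M_(n,1)) *m (- const_mx 1 : 'M_(1,n)) = 1%:M + d *: const_mx 1 :> 'M[R]_n.
  apply/matrixP=> i j; rewrite !mxE big_ord1 !mxE; congr (_ + _).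
  by rewrite mulrN opprK mulr1.
have E2 : 1 - (- const_mx 1 : 'M_(1,n)) *m (d *: const_mx 1 : 'M_(n,1)) = (1 + d * n%:R)%:M :> 'M[R]_1.
  apply/matrixP=> i j; rewrite !ord1 !mxE /=.
  rewrite (eq_bigr (fun _ => - d)); last by move=> k _; rewrite !mxE mulN1r mulr1.
  by rewrite sumr_const card_ord -mulNrn opprK mulr_natr.
by rewrite E1 E2 det_scalar1 in H1.
Qed.
End Gen.
Lemma char_poly_horner (R : comNzRingType) n (A : 'M[R]_n) (x : R) :
  (char_poly A).[x] = \det (x%:M - A).
Proof.
rewrite /char_poly -horner_evalE -det_map_mx; congr (\det _).
apply/matrixP=> i j; rewrite !mxE /= horner_evalE.
by rewrite hornerD hornerN hornerC hornerMn hornerX.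
Qed.

Lemma det_lin_char (R : fieldType) n (A : 'M[R]_n) (mu : seq R) (a b : R) :
  b != 0 -> size mu = n ->
  char_poly A = \prod_(m <- mu) ('X - m%:P) ->
  \det (a%:M + b *: A) = \prod_(m <- mu) (a + b * m).
Proof.
move=> b0 sz cA.
have -> : a%:M + b *: A = (- b) *: ((- (a / b))%:M - A).
  apply/matrixP=> i j; rewrite !mxE; case: eqP => _;
    rewrite ?mulr1n ?mulr0n; by field; rewrite ?b0.
rewrite detZ -char_poly_horner cA horner_prod -sz; clear sz cA.
elim: mu => [|m s IH]; first by rewrite !big_nil expr0 mulr1.
rewrite !big_cons /= exprS -IH hornerXsubC; by field.
Qed.
Lemma poly_eq_ge2 (R : numFieldType) (p q : {poly R}) :
  (forall x : R, 2 <= x -> p.[x] = q.[x]) -> p = q.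
Proof.
move=> H; apply/eqP; rewrite -subr_eq0; apply/eqP.
apply: (@roots_geq_poly_eq0 _ _ [seq (i + 2)%:R | i <- iota 0 (size (p - q))]).
- apply/allP => x /mapP [i _ ->]; rewrite /root hornerD hornerN H ?subrr //.
  by rewrite natrD lerDr.
- rewrite map_inj_uniq ?iota_uniq // => i j /eqP.
  by rewrite eqr_nat eqn_add2r => /eqP.
- by rewrite size_map size_iota.
Qed.
Lemma det_block_const (R : fieldType) n1 n2 (P : 'M[R]_n1) (S : 'M[R]_n2) (b p : R) :
  p != 0 -> (forall i, \sum_j P i j = p) ->
  \det (block_mx P (const_mx b) (const_mx b) S)
  = \det P * \det (S - (b * b * n1%:R / p) *: const_mx 1).
Proof.
move=> p0 Hp.
have E : block_mx P (const_mx b) (const_mx b) S *m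
          block_mx 1%:M (const_mx (- b / p)) 0 1%:M
       = block_mx P 0 (const_mx b) (S - (b * b * n1%:R / p) *: const_mx 1).
  rewrite mulmx_block !mulmx1 !mulmx0 !addr0; congr block_mx.
    apply/matrixP=> i j; rewrite !mxE.
    under eq_bigr do rewrite mxE.
    rewrite -mulr_suml Hp; field; exact: p0.
  apply/matrixP=> i j; rewrite !mxE.
  under eq_bigr do rewrite !mxE.
  rewrite sumr_const card_ord -mulr_natr; field; exact: p0.
have := congr1 determinant E.
by rewrite det_mulmx det_ublock !det1 !mulr1 det_lblock.
Qed.

Lemma det_sub_J (R : fieldType) n (S : 'M[R]_n) (g s : R) :
  s != 0 -> (forall i, \sum_j S i j = s) ->
  \det (S - g *: const_mx 1) = \det S * (1 - g / s * n%:R).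
Proof.
move=> s0 Hs.
have E : S *m (1%:M + (- (g / s)) *: const_mx 1) = S - g *: const_mx 1.
  rewrite mulmxDr mulmx1 -scalemxAr; congr (_ + _).
  apply/matrixP=> i j; rewrite !mxE.
  under eq_bigr do rewrite mxE mulr1.
  rewrite Hs; field; exact: s0.
by rewrite -E det_mulmx det_I_J mulNr.
Qed.
Lemma det_reindex (R : comNzRingType) (V : finType) k (h : 'I_k -> V) (F : V -> V -> R) :
  bijective h ->
  \det (\matrix_(i, j) F (h i) (h j))
  = \det (\matrix_(i < #|V|, j < #|V|) F (enum_val i) (enum_val j)).
Proof.
move=> bh.
have ek : k = #|V| by rewrite -(bij_eq_card bh) card_ord.
subst k.
have hinj : injective (fun i => enum_rank (h i)).
  by move=> i j /enum_rank_inj; apply: (bij_inj bh).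
set M := \matrix_(i < #|V|, j < #|V|) F (enum_val i) (enum_val j).
have -> : \matrix_(i, j) F (h i) (h j) = row_perm (perm hinj) (col_perm (perm hinj) M).
  by apply/matrixP=> i j; rewrite !mxE !permE /= !enum_rankK.
rewrite row_permE col_permE !det_mulmx !det_perm odd_permV mulrCA mulrA.
by rewrite -mulrA -signr_addb addbb expr0 mulr1.
Qed.
Section Graph.
Variables (V : finType) (e : rel V).
Hypothesis He : simple_graph e.

Lemma deg_sum u : deg e u = \sum_w (e u w : nat).
Proof.
by rewrite /deg -sum1dep_card big_mkcond /=; apply: eq_bigr => w _; case: (e u w).
Qed.

Lemma edge_dec (f : edgeT e) : exists x y, [/\ e x y, x != y & val f = [set x; y]].
Proof.
have := valP f; case/existsP=> x /existsP [y /andP [exy /eqP fE]].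
exists x, y; split => //; apply/negP => /eqP xy; subst y.
by case: He => _ irr; rewrite irr in exy.
Qed.

Lemma set2_eq (u v x y : V) : u != v -> u \in [set x; y] -> v \in [set x; y] ->
  (u == x) && (v == y) || (u == y) && (v == x).
Proof.
move=> uv; rewrite !in_set2.
case/orP=> /eqP eu; case/orP=> /eqP ev; subst; rewrite ?eqxx ?orbT //.
all: by rewrite eqxx in uv.
Qed.

Lemma pair_count u v : u != v ->
  \sum_(f : edgeT e) ((u \in val f) && (v \in val f) : nat) = e u v.
Proof.
move=> uv.
case: He => esym eirr.
have key : forall f : edgeT e, (u \in val f) && (v \in val f) -> e u v && (val f == [set u; v]).
  move=> f /andP [uf vf]; have [x [y [exy xy fE]]] := edge_dec f.
  rewrite fE in uf vf *.
  case/orP: (set2_eq uv uf vf) => /andP [/eqP ux /eqP vy]; subst.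
    by rewrite exy eqxx.
  by rewrite esym exy setUC eqxx.
case euv: (e u v); last first.
  apply: big1 => f _; case H: (_ && _) => //.
  by have := key f H; rewrite euv.
have Hed : is_edge e [set u; v].
  by apply/existsP; exists u; apply/existsP; exists v; rewrite euv eqxx.
pose f0 : edgeT e := exist _ [set u; v] Hed.
rewrite (bigD1 f0) //= !in_set2 !eqxx orbT /= big1 // => f ff0.
case H: (_ && _) => //; have /andP [_ /eqP fE] := key f H.
have ff : f = f0 by apply: val_inj; rewrite /= fE.
by rewrite ff eqxx in ff0.
Qed.

Lemma other_count (f : edgeT e) u : u \in val f ->
  \sum_w ((w \in val f) && (w != u) : nat) = 1%N.
Proof.
move=> uf; have [x [y [exy xy fE]]] := edge_dec f.
have -> : \sum_w ((w \in val f) && (w != u) : nat) = #|val f :\ u|.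
  rewrite -sum1_card [RHS]big_mkcond /=; apply: eq_bigr => w _.
  by rewrite in_setD1 andbC; case: (_ && _).
have := cardsD1 u (val f); rewrite uf fE cards2 xy.
by case.
Qed.

Lemma inc_count u : \sum_(f : edgeT e) (u \in val f : nat) = deg e u.
Proof.
case: He => esym eirr.
transitivity (\sum_(f : edgeT e) \sum_w ((u \in val f) && ((w \in val f) && (w != u)) : nat)).
  apply: eq_bigr => f _; case uf: (u \in val f); last by rewrite big1.
  by rewrite (other_count uf).
rewrite exchange_big deg_sum; apply: eq_bigr => w _.
case: (eqVneq w u) => [->|wu].
  by rewrite eirr; apply: big1 => f _; rewrite !andbF.
have uw : u != w by rewrite eq_sym wu.
by rewrite -(pair_count uw); apply: eq_bigr => f _; rewrite andbT.
Qed.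

Lemma pair_count_all u v :
  \sum_(f : edgeT e) ((u \in val f) && (v \in val f) : nat) = (e u v + (u == v) * deg e u)%N.
Proof.
case: (eqVneq u v) => [<-|uv].
  case: He => _ eirr; rewrite eirr mul1n add0n -inc_count.
  by apply: eq_bigr => f _; rewrite andbb.
by rewrite pair_count // mul0n addn0.
Qed.

End Graph.
Section Join.
Variables (V1 V2 : finType) (e1 : rel V1) (e2 : rel V2).
Hypothesis He1 : simple_graph e1.
Hypothesis He2 : simple_graph e2.

Local Notation ej := (sv_join_rel e1 e2).

Lemma sum_one (T : finType) : \sum_(x : T) (1 : nat) = #|T|.
Proof. by rewrite sum1_card. Qed.

Lemma degJ1 u : deg ej (inl (inl u)) = (deg e1 u + #|V2|)%N.
Proof.
by rewrite deg_sum !big_sumType /= big1_eq (inc_count He1) sum_one.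
Qed.

Lemma degJE f : deg ej (inl (inr f)) = 2%N.
Proof.
rewrite deg_sum !big_sumType /= !big1_eq.
have [x [y [exy xy fE]]] := edge_dec He1 f.
have -> : \sum_(u : V1) (u \in val f : nat) = #|val f|.
  by rewrite -sum1_card [RHS]big_mkcond /=; apply: eq_bigr => w _; case: (_ \in _).
by rewrite fE cards2 xy.
Qed.

Lemma degJ2 w : deg ej (inr w) = (#|V1| + deg e2 w)%N.
Proof.
by rewrite deg_sum !big_sumType /= big1_eq sum_one addr0 -deg_sum.
Qed.

End Join.
Lemma sum_enum (R : nmodType) (V : finType) (F : V -> R) :
  \sum_(i < #|V|) F (enum_val i) = \sum_v F v.
Proof. by rewrite -(big_enum_val (A := V)). Qed.

Definition Fv (R : rcfType) (V : finType) (e : rel V) (y : R) (u v : V) : R :=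
  y *+ (u == v) + (e u v)%:R * ((Num.sqrt (deg e u)%:R)^-1 * (Num.sqrt (deg e v)%:R)^-1).

Lemma nlapE (R : rcfType) (V : finType) (e : rel V) i j :
  nlap R e i j = (i == j)%:R - (e (enum_val i) (enum_val j))%:R *
     ((Num.sqrt (deg e (enum_val i))%:R)^-1 * (Num.sqrt (deg e (enum_val j))%:R)^-1).
Proof.
rewrite /nlap /degmx_invsqrt mul_diag_mx mul_mx_diag !mxE.
by rewrite mulrA [_ * (_%:R)]mulrC -mulrA [X in _ - X]mulrCA.
Qed.

Lemma char_mx_nlap (R : rcfType) (V : finType) (e : rel V) (x : R) :
  x%:M - nlap R e = \matrix_(i < #|V|, j < #|V|) Fv e (x - 1) (enum_val i) (enum_val j).
Proof.
apply/matrixP=> i j; rewrite [RHS]mxE mxE [X in _ + X]mxE nlapE mxE /Fv (inj_eq enum_val_inj).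
by case: (i == j); rewrite ?mulr1n ?mulr0n; ring.
Qed.

Lemma sqrt_inv_sq (R : rcfType) (n : nat) :
  (Num.sqrt (n%:R : R))^-1 * (Num.sqrt n%:R)^-1 = (n%:R)^-1.
Proof. by rewrite -invfM -expr2 sqr_sqrtr // ler0n. Qed.

Lemma nlap_reg (R : rcfType) (V : finType) (e : rel V) r i j :
  regular e r ->
  nlap R e i j = (i == j)%:R - (r%:R)^-1 * (e (enum_val i) (enum_val j))%:R.
Proof. by move=> reg; rewrite nlapE !reg sqrt_inv_sq mulrC. Qed.

Lemma nlap_rowsum (R : rcfType) (V : finType) (e : rel V) r i :
  (0 < r)%N -> regular e r -> \sum_j nlap R e i j = 0.
Proof.
move=> r0 reg.
under eq_bigr do rewrite (nlap_reg _ _ _ reg).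
rewrite sumrB -mulr_sumr (sum_enum (fun v => (e (enum_val i) v)%:R)).
have -> : \sum_v (e (enum_val i) v)%:R = (deg e (enum_val i))%:R :> R.
  by rewrite deg_sum natr_sum.
rewrite reg (bigD1 i) //= eqxx big1 => [|j]; last by rewrite eq_sym => /negbTE ->.
rewrite addr0 mulVf ?subrr //.
by rewrite pnatr_eq0 -lt0n.
Qed.
Definition hJ (V1 E V2 : finType) (i : 'I_(#|E| + (#|V1| + #|V2|))) : (V1 + E) + V2 :=
  match split i with
  | inl f => inl (inr (enum_val f))
  | inr j => match split j with
             | inl u => inl (inl (enum_val u))
             | inr w => inr (enum_val w)
             end
  end.

Definition gJ (V1 E V2 : finType) (v : (V1 + E) + V2) : 'I_(#|E| + (#|V1| + #|V2|)) :=
  match v with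
  | inl (inr f) => lshift _ (enum_rank f)
  | inl (inl u) => rshift _ (lshift _ (enum_rank u))
  | inr w => rshift _ (rshift _ (enum_rank w))
  end.

Lemma split_l m n (i : 'I_m) : split (lshift n i) = inl i.
Proof. exact: (unsplitK (inl i)). Qed.
Lemma split_r m n (i : 'I_n) : split (rshift m i) = inr i.
Proof. exact: (unsplitK (inr i)). Qed.

Lemma hJ_bij (V1 E V2 : finType) : bijective (@hJ V1 E V2).
Proof.
exists (@gJ V1 E V2).
  move=> i; rewrite -[i]splitK; case: (split i) => [f|j] /=.
    by rewrite /hJ split_l /= enum_valK.
  rewrite -[j]splitK; case: (split j) => [u|w] /=.
    by rewrite /hJ split_r split_l /= enum_valK.
  by rewrite /hJ split_r split_r /= enum_valK.
by case=> [[u|f]|w]; rewrite /hJ /= ?split_l ?split_r ?split_l ?split_r /= enum_rankK.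
Qed.

Lemma hJ_E (V1 E V2 : finType) f : @hJ V1 E V2 (lshift _ f) = inl (inr (enum_val f)).
Proof. by rewrite /hJ split_l. Qed.
Lemma hJ_1 (V1 E V2 : finType) u : @hJ V1 E V2 (rshift _ (lshift _ u)) = inl (inl (enum_val u)).
Proof. by rewrite /hJ split_r split_l. Qed.
Lemma hJ_2 (V1 E V2 : finType) w : @hJ V1 E V2 (rshift _ (rshift _ w)) = inr (enum_val w).
Proof. by rewrite /hJ split_r split_r. Qed.
Lemma rowsum_lin (R : rcfType) n (A : 'M[R]_n) (al be : R) i :
  \sum_j (al%:M + be *: A) i j = al + be * \sum_j A i j.
Proof.
under eq_bigr do rewrite mxE [X in _ + X]mxE.
rewrite big_split /= mulr_sumr; congr (_ + _).
rewrite (bigD1 i) //= !mxE eqxx mulr1n big1 ?addr0 // => j ji.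
by rewrite !mxE eq_sym (negbTE ji) mulr0n.
Qed.

Lemma prod_mul_exp (R : comNzRingType) (s : seq R) (f g : R -> R) (y : R) :
  (forall m, f m * y = g m) -> \prod_(m <- s) f m * y ^+ size s = \prod_(m <- s) g m.
Proof.
move=> H; elim: s => [|m s IH]; first by rewrite !big_nil mulr1.
by rewrite !big_cons /= exprS -IH -H; ring.
Qed.

Lemma final_rearr (R : comNzRingType) (Y Y' A0 B Yk y al al' K x Q : R) :
  Y = Y' -> al * (al' * K) * y = x * Q ->
  Y * (al * A0 * (al' * B * K)) * (y * Yk) = x * Y' * Q * (A0 * Yk) * B.
Proof.
move=> <- h; transitivity (Y * A0 * B * Yk * (al * (al' * K) * y)); first by ring.
by rewrite h; ring.
Qed.
Lemma eq_inlE (A B : eqType) (a a' : A) : (inl a == inl a' :> A + B) = (a == a').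
Proof. by apply/eqP/eqP => [[]|->]. Qed.
Lemma eq_inrE (A B : eqType) (a a' : B) : (inr a == inr a' :> A + B) = (a == a').
Proof. by apply/eqP/eqP => [[]|->]. Qed.
Lemma eq_lrE (A B : eqType) (a : A) (b : B) : (inl a == inr b :> A + B) = false.
Proof. by []. Qed.
Unset Implicit Arguments.
Theorem theorem2p3 (R : rcfType) (V1 V2 : finType) (e1 : rel V1) (e2 : rel V2)
  (r1 r2 : nat) (mu nu : seq R) :
  simple_graph e1 -> simple_graph e2 ->
  (0 < #|V1|)%N -> (0 < #|V2|)%N ->
  (1 <= r1)%N -> (1 <= r2)%N ->
  regular e1 r1 -> regular e2 r2 ->
  size mu = #|V1| -> nth 0 mu 0 = 0 ->
  char_poly (nlap R e1) = \prod_(m <- mu) ('X - m%:P) ->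
  size nu = #|V2| -> nth 0 nu 0 = 0 ->
  char_poly (nlap R e2) = \prod_(m <- nu) ('X - m%:P) ->
  let n1 : R := (#|V1|)%:R in
  let n2 : R := (#|V2|)%:R in
  let m1 := nedges e1 in
  let s1 : R := r1%:R in
  let s2 : R := r2%:R in
  (* (X-1)^(m1-n1) is cleared by multiplying both sides by (X-1)^n1 *)
  char_poly (nlap R (sv_join_rel e1 e2)) * ('X - 1) ^+ #|V1| =
    'X * ('X - 1) ^+ m1 *
    ('X ^+ 2 - (2 + n1 / (s2 + n1))%:P * 'X
       + (2 * n1 / (s2 + n1) + n2 * s2 / ((s1 + n2) * (s2 + n1)))%:P) *
    \prod_(m <- behead mu) (('X - 1) ^+ 2 - (s1 * (2 - m) / (2 * (s1 + n2)))%:P) *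
    \prod_(v <- behead nu) ('X - ((n1 + s2 * v) / (s2 + n1))%:P).
Proof.
Proof.
move=> sg1 sg2 n1p n2p r1p r2p reg1 reg2 szmu mu0 cp1 sznu nu0 cp2 n1 n2 m1 s1 s2.
case: mu szmu mu0 cp1 => [|m0 mu'] szmu /= mu0 cp1; first by rewrite -szmu in n1p.
case: nu sznu nu0 cp2 => [|v0 nu'] sznu /= nu0 cp2; first by rewrite -sznu in n2p.
subst m0 v0.
have L1E i j := nlap_reg R i j reg1.
have L1rs i := nlap_rowsum R i r1p reg1.
have L2E i j := nlap_reg R i j reg2.
have L2rs i := nlap_rowsum R i r2p reg2.
set L1 := nlap R e1 in L1E L1rs cp1 *.
set L2 := nlap R e2 in L2E L2rs cp2 *.
clearbody L1 L2.
apply: poly_eq_ge2 => x x2.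
rewrite hornerM char_poly_horner char_mx_nlap.
rewrite -(det_reindex (Fv (sv_join_rel e1 e2) (x - 1)) (@hJ_bij V1 (edgeT e1) V2)).
set y := x - 1.
set M := \matrix_(i, j) _.
pose N1 := (r1 + #|V2|)%N; pose N2 := (#|V1| + r2)%N.
have d1 u : deg (sv_join_rel e1 e2) (inl (inl u)) = N1 by rewrite degJ1 // reg1.
have dE f : deg (sv_join_rel e1 e2) (inl (inr f)) = 2%N by rewrite degJE.
have d2 w : deg (sv_join_rel e1 e2) (inr w) = N2 by rewrite degJ2 // reg2.
pose a := (Num.sqrt (N1%:R : R))^-1 * (Num.sqrt (2%:R : R))^-1.
pose b := (Num.sqrt (N1%:R : R))^-1 * (Num.sqrt (N2%:R : R))^-1.
have MEE f f' : M (lshift _ f) (lshift _ f') = y *+ (f == f').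
  by rewrite mxE !hJ_E /Fv /= !eq_inlE !eq_inrE (inj_eq enum_val_inj) mul0r addr0.
have MEu f u : M (lshift _ f) (rshift _ (lshift _ u)) = (enum_val u \in val (enum_val f))%:R * a.
  by rewrite mxE hJ_E hJ_1 /Fv /= dE d1 mulr0n add0r /a [X in _ * X]mulrC.
have MEw f w : M (lshift _ f) (rshift _ (rshift _ w)) = 0.
  by rewrite mxE hJ_E hJ_2 /Fv /= mulr0n mul0r addr0.
have MuE u f : M (rshift _ (lshift _ u)) (lshift _ f) = (enum_val u \in val (enum_val f))%:R * a.
  by rewrite mxE hJ_E hJ_1 /Fv /= dE d1 mulr0n add0r.
have Muu u u' : M (rshift _ (lshift _ u)) (rshift _ (lshift _ u')) = y *+ (u == u').
  by rewrite mxE !hJ_1 /Fv /= !eq_inlE (inj_eq enum_val_inj) mul0r addr0.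
have Muw u w : M (rshift _ (lshift _ u)) (rshift _ (rshift _ w)) = b.
  by rewrite mxE hJ_1 hJ_2 /Fv /= d1 d2 mulr0n add0r mul1r.
have MwE w f : M (rshift _ (rshift _ w)) (lshift _ f) = 0.
  by rewrite mxE hJ_E hJ_2 /Fv /= mulr0n mul0r addr0.
have Mwu w u : M (rshift _ (rshift _ w)) (rshift _ (lshift _ u)) = b.
  by rewrite mxE hJ_1 hJ_2 /Fv /= d1 d2 mulr0n add0r mul1r mulrC.
have Mww w w' : M (rshift _ (rshift _ w)) (rshift _ (rshift _ w')) =
    y *+ (w == w') + (e2 (enum_val w) (enum_val w'))%:R / N2%:R.
  by rewrite mxE !hJ_2 /Fv /= !eq_inrE (inj_eq enum_val_inj) !d2 sqrt_inv_sq.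
clearbody M.
have yge : 1 <= y by rewrite /y; lra.
have y0 : y != 0 by apply: lt0r_neq0; lra.
have UL : ulsubmx M = y%:M.
  by apply/matrixP=> f f'; rewrite mxE mxE MEE mxE.
rewrite -[M]submxK UL schur_ul //.
set D2 := drsubmx M - y^-1 *: (dlsubmx M *m ursubmx M).
have D2ur : ursubmx D2 = const_mx b.
  apply/matrixP=> u w; rewrite !mxE Muw big1 ?mulr0 ?subr0 // => f _.
  by rewrite !mxE MEw mulr0.
have D2dl : dlsubmx D2 = const_mx b.
  apply/matrixP=> w u; rewrite !mxE Mwu big1 ?mulr0 ?subr0 // => f _.
  by rewrite !mxE MwE mul0r.
have r1R : (r1%:R : R) != 0 by rewrite pnatr_eq0 -lt0n.
have r2R : (r2%:R : R) != 0 by rewrite pnatr_eq0 -lt0n.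
have s1p : s1 != 0 by rewrite pnatr_eq0 -lt0n.
have s2p : s2 != 0 by rewrite pnatr_eq0 -lt0n.
have N1p : (N1%:R : R) != 0 by rewrite pnatr_eq0 addn_eq0 negb_and -!lt0n r1p.
have N2p : (N2%:R : R) != 0 by rewrite pnatr_eq0 addn_eq0 negb_and -!lt0n n1p.
pose t := a * a.
have tE : t = (N1%:R)^-1 / 2.
  by rewrite /t /a mulrACA !sqrt_inv_sq.
pose be := y^-1 * t * s1.
pose al := y - 2 * be.
have PE : ulsubmx D2 = al%:M + be *: L1.
  apply/matrixP=> u u'; rewrite !mxE Muu L1E.
  under eq_bigr do rewrite !mxE MuE MEu.
 
  rewrite (sum_enum (V := edgeT e1) (fun f => (enum_val u \in val f)%:R * a * ((enum_val u' \in val f)%:R * a))).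
  have -> : \sum_(f : edgeT e1) (enum_val u \in val f)%:R * a * ((enum_val u' \in val f)%:R * a)
      = t * ((e1 (enum_val u) (enum_val u') + (enum_val u == enum_val u') * deg e1 (enum_val u))%N)%:R.
    rewrite -(pair_count_all sg1) natr_sum mulr_sumr; apply: eq_bigr => f _.
    by case: (_ \in _); case: (_ \in _); rewrite /= /t; ring.
  rewrite reg1 (inj_eq enum_val_inj) /be /al.
  case: (u == u'); rewrite /= ?mulr1n ?mulr0n ?natrD ?mul1n ?mul0n ?addn0 /s1 /be; field; by rewrite r1R y0.
 
have N1lt : s1 / N1%:R < 1.
  rewrite ltr_pdivrMr ?ltr0n ?addn_gt0 ?r1p // mul1r ltr_nat /N1.
  by rewrite -[X in (X < _)%N]addn0 ltn_add2l.
have al0 : al != 0.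
  have h : al * y = y * y - s1 / N1%:R.
    rewrite /al /be tE; field; by rewrite y0 N1p.
  have : 0 < al * y by rewrite h; nra.
  by apply: contraTneq => ->; rewrite mul0r ltxx.
have PS i : \sum_j ulsubmx D2 i j = al.
  by rewrite PE rowsum_lin L1rs mulr0 addr0.
pose c := (N2%:R : R)^-1.
pose be' := - (s2 * c).
pose al' := y + s2 * c.
have SE : drsubmx D2 = al'%:M + be' *: L2.
  apply/matrixP=> w w'; rewrite !mxE Mww L2E big1 => [|f _]; last by rewrite !mxE MwE mul0r.
  rewrite /be' /al' /c /s2.
  case: (w == w'); rewrite /= ?mulr1n ?mulr0n; field; by rewrite r2R N2p.
have al0' : al' != 0.
  have : 0 <= s2 * c by rewrite /c mulr_ge0 // invr_ge0 ler0n.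
  move=> h; apply: lt0r_neq0; rewrite /al'; lra.
have SS i : \sum_j drsubmx D2 i j = al'.
  by rewrite SE rowsum_lin L2rs mulr0 addr0.
clearbody D2.
rewrite -[D2]submxK D2ur D2dl (det_block_const _ _ al0 PS) (det_sub_J _ al0' SS).
have be0 : be != 0.
  by rewrite /be tE !mulf_neq0 ?invr_eq0 // pnatr_eq0.
have be0' : be' != 0.
  by rewrite /be' oppr_eq0 mulf_neq0 ?invr_eq0.
rewrite PE SE (det_lin_char al be0 szmu cp1) (det_lin_char al' be0' sznu cp2) !big_cons.
have HP : \prod_(j <- mu') (al + be * j) * y ^+ size mu'
    = \prod_(m <- mu') ((('X - 1) ^+ 2 - (s1 * (2 - m) / (2 * (s1 + n2)))%:P).[x]).
  apply: prod_mul_exp => m.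
  rewrite hornerD hornerN hornerC horner_exp hornerD hornerN hornerX hornerC.
  rewrite /al /be tE /N1 natrD -/s1 -/n2 -/y.
  field; by rewrite -natrD pnatr_eq0 addn_eq0 negb_and -!lt0n r1p y0.
have HQ : \prod_(j <- nu') (al' + be' * j) = \prod_(v <- nu') (('X - ((n1 + s2 * v) / (s2 + n1))%:P).[x]).
  apply: eq_bigr => v _; rewrite hornerXsubC /al' /be' /c /N2 natrD -/s2 -/n1 /y.
  field; by rewrite -natrD pnatr_eq0 addn_eq0 negb_and -!lt0n r2p.
have bbE : b * b = (N1%:R)^-1 * (N2%:R)^-1.
  by rewrite /b mulrACA !sqrt_inv_sq.
rewrite !mulr0 !addr0 ?(hornerM, hornerD, hornerN, hornerX, hornerC, horner_exp, horner_prod, hornerXn).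
rewrite -[in (x - 1) ^+ #|V1|]szmu /= exprS -/y.
rewrite HQ -HP; apply: final_rearr => //.
rewrite -/n1 -/n2.
have -> : al * (al' * (1 - b * b * n1 / al / al' * n2)) = al * al' - b * b * n1 * n2.
  by field; rewrite al0 al0'.
rewrite bbE /al /al' /be tE /c /N1 /N2 !natrD -/n1 -/n2 -/s1 -/s2 /y.
field; rewrite -/y y0 -!natrD !pnatr_eq0 !addn_eq0 !negb_and -!lt0n r1p r2p.
by [].
Qed.
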